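(* Let $Q$ be a quandle. (1) If $Q$ is right orderable, then for all $x,y\in Q$ with $S_y(x)\neq x$, the orbit of $x$ under the cyclic group $\langle S_y\rangle$ is infinite. (2) If $Q$ is left orderable, then $Q$ is semi-latin and, for all $x\neq y$ in $Q$, the set $\{L_y^n(x)\}_{n=0,1,\ldots}$ is infinite, where $L_y^0(x)=x$ and $L_y^{i+1}(x)=y*(L_y^i(x))$ for $i\ge 0$.
   Context: A quandle is a non-empty set $Q$ with a binary operation $*$ such that $x*x=x$ for all $x$; for all $x,y$ there is a unique $z$ with $x=z*y$; and $(x*y)*z=(x*z)*(y*z)$ for all $x,y,z$. For $y\in Q$, $S_y:Q\to Q$ is the bijection $S_y(x)=x*y$, and $L_y:Q\to Q$ is the map $L_y(x)=y*x$. $Q$ is right orderable if there is a linear order $<$ on $Q$ such that $x<y$ implies $x*z<y*z$ for all $x,y,z$; left orderable if there is a linear order $<$ such that $x<y$ implies $z*x<z*y$ for all $x,y,z$. $Q$ is semi-latin if each $L_x$ is injective. *)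

(* Defs.v *)
From Stdlib Require Import ZArith List.

Record quandle := Quandle {
  qcar :> Type;
  qop : qcar -> qcar -> qcar;
  q_inhabited : inhabited qcar;
  q_idem : forall x, qop x x = x;
  q_rdiv : forall x y, exists! z, x = qop z y;
  q_rdist : forall x y z, qop (qop x y) z = qop (qop x z) (qop y z)
}.

Definition S_ {Q : quandle} (y : Q) : Q -> Q := fun x => qop Q x y.
Definition L_ {Q : quandle} (y : Q) : Q -> Q := fun x => qop Q y x.

Definition strict_linear_order {T : Type} (lt : T -> T -> Prop) : Prop :=
  (forall x, ~ lt x x) /\
  (forall x y z, lt x y -> lt y z -> lt x z) /\
  (forall x y, lt x y \/ x = y \/ lt y x).

Definition right_orderable (Q : quandle) : Prop :=
  exists lt : Q -> Q -> Prop, strict_linear_order lt /\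
    forall x y z, lt x y -> lt (qop Q x z) (qop Q y z).

Definition left_orderable (Q : quandle) : Prop :=
  exists lt : Q -> Q -> Prop, strict_linear_order lt /\
    forall x y z, lt x y -> lt (qop Q z x) (qop Q z y).

Definition semi_latin (Q : quandle) : Prop :=
  forall x : Q, forall a b : Q, L_ x a = L_ x b -> a = b.

Definition finite_set {T : Type} (P : T -> Prop) : Prop :=
  exists l : list T, forall t, P t -> In t l.

(* f^n for a bijection f with inverse g, n : Z *)
Definition zpow {T : Type} (f g : T -> T) (n : Z) (x : T) : T :=
  match n with
  | Z0 => x
  | Zpos p => Nat.iter (Pos.to_nat p) f x
  | Zneg p => Nat.iter (Pos.to_nat p) g x
  end.

Definition is_inverse {T : Type} (f g : T -> T) : Prop :=
  (forall x, f (g x) = x) /\ (forall x, g (f x) = x).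

(* orbit of x under the cyclic group <S_y>: { S_y^n x | n in Z };
   g is any two-sided inverse of S_y (unique, since S_y is a bijection). *)
Definition S_orbit {Q : quandle} (y x : Q) (g : Q -> Q) : Q -> Prop :=
  fun t => exists n : Z, t = zpow (S_ y) g n x.

Definition L_forward_orbit {Q : quandle} (y x : Q) : Q -> Prop :=
  fun t => exists n : nat, t = Nat.iter n (L_ y) x.

(* Main.v *)
Require Import Defs.
From Stdlib Require Import ZArith List Lia FinFun.

Lemma no_inj_list {T : Type} (h : nat -> T) (l : list T) :
  (forall n m, h n = h m -> n = m) -> (forall n, In (h n) l) -> False.
Proof.
  intros Hi Hl.
  assert (HN : NoDup (map h (seq 0 (S (length l))))).
  { apply FinFun.Injective_map_NoDup; [exact Hi | apply seq_NoDup]. }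
  assert (Hinc : incl (map h (seq 0 (S (length l)))) l).
  { intros a Ha. apply in_map_iff in Ha. destruct Ha as [n [<- _]]. apply Hl. }
  pose proof (NoDup_incl_length HN Hinc) as Hlen.
  rewrite length_map, length_seq in Hlen. lia.
Qed.

Lemma mono_inj {T : Type} (lt : T -> T -> Prop) (h : nat -> T) :
  (forall x, ~ lt x x) -> (forall a b c, lt a b -> lt b c -> lt a c) ->
  (forall n, lt (h n) (h (S n))) -> forall n m, h n = h m -> n = m.
Proof.
  intros Hirr Htr Hs.
  assert (K : forall k n, lt (h n) (h (S k + n))).
  { induction k; intros n; simpl. apply Hs.
    eapply Htr. apply (IHk n). apply Hs. }
  intros n m E.
  destruct (Nat.lt_trichotomy n m) as [H|[H|H]]; auto; exfalso.
  - replace m with (S (m - n - 1) + n) in E by lia.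
    pose proof (K (m - n - 1) n) as K'. rewrite <- E in K'. eapply Hirr; eauto.
  - replace n with (S (n - m - 1) + m) in E by lia.
    pose proof (K (n - m - 1) m) as K'. rewrite E in K'. eapply Hirr; eauto.
Qed.

Lemma iter_inj {T : Type} (lt : T -> T -> Prop) (f : T -> T) (x : T) :
  strict_linear_order lt -> (forall a b, lt a b -> lt (f a) (f b)) -> f x <> x ->
  forall n m, Nat.iter n f x = Nat.iter m f x -> n = m.
Proof.
  intros [Hirr [Htr Htot]] Hm Hfx.
  destruct (Htot x (f x)) as [H|[H|H]].
  - apply (mono_inj lt); auto.
    induction n; simpl. exact H. apply Hm. exact IHn.
  - congruence.
  - apply (mono_inj (fun a b => lt b a)); auto.
    + intros a b c H1 H2. eauto.
    + induction n; simpl. exact H. apply Hm. exact IHn.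
Qed.

Theorem proposition3p7 (Q : quandle) :
  (right_orderable Q ->
     forall (x y : Q) (Sinv : Q -> Q), is_inverse (S_ y) Sinv ->
       S_ y x <> x -> ~ finite_set (S_orbit y x Sinv)) /\
  (left_orderable Q ->
     semi_latin Q /\
     forall x y : Q, x <> y -> ~ finite_set (L_forward_orbit y x)).
Proof.
  split.
  - intros [lt [Hlo Hm]] x y Sinv _ Hne [l Hl].
    apply (no_inj_list (fun n => Nat.iter n (S_ y) x) l).
    + apply (iter_inj lt); auto. intros a b H. apply Hm. exact H.
    + intros n. apply Hl. exists (Z.of_nat n). destruct n; [reflexivity|].
      simpl. rewrite SuccNat2Pos.id_succ. reflexivity.
  - intros [lt [Hlo Hm]].
    assert (SL : semi_latin Q).
    { intros z a b E. destruct Hlo as [Hirr [_ Htot]].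
      destruct (Htot a b) as [H|[H|H]]; auto; exfalso;
        pose proof (Hm _ _ z H) as H'; unfold L_ in E;
        rewrite E in H'; eapply Hirr; eauto. }
    split; [exact SL|].
    intros x y Hxy [l Hl].
    assert (Hfx : L_ y x <> x).
    { intros E. unfold L_ in E.
      assert (E2 : qop Q (qop Q x y) x = x).
      { rewrite q_rdist, E, !q_idem. reflexivity. }
      assert (E3 : qop Q x y = x).
      { destruct (q_rdiv Q x x) as [z [_ Hu]].
        assert (A1 := Hu (qop Q x y) (eq_sym E2)).
        assert (A2 := Hu x (eq_sym (q_idem Q x))).
        congruence. }
      apply Hxy. apply (SL x). unfold L_. rewrite E3. apply q_idem. }
    apply (no_inj_list (fun n => Nat.iter n (L_ y) x) l).
    + apply (iter_inj lt); auto.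
    + intros n. apply Hl. exists n. reflexivity.
Qed.
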